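(* Let $1\le r\le n$ and let $p=(p_1,\dots,p_n)$ be a size vector. If $A,B\subseteq S_p$ form a maximal pair of $r$-cross-intersecting families, then each of $A$, $B$ determines the other; in particular $A$ and $B$ have the same set of relevant coordinates. Moreover, if $A$ is the Hamming ball of radius $l$ around $x_0\in S_p$ in a set of coordinates $T\subseteq[n]$, then $|T|\ge l+r$, $B$ is the Hamming ball of radius $|T|-l-r$ around $x_0$ in the coordinates $T$, $p_i\le p_j$ holds for every $i\in T$ and $j\in[n]\setminus T$, and $\big||T|-2l-r\big|\le 1$.
   Context: $[m]=\{1,\dots,m\}$. A size vector is a sequence of integers $p=(p_1,\dots,p_n)$ with $p_i\ge 2$ for all $i$; $S_p=[p_1]\times\cdots\times[p_n]$. Two vectors $x,y\in S_p$ are $r$-intersecting if $|\{i: x_i=y_i\}|\ge r$; families $A,B\subseteq S_p$ are $r$-cross-intersecting if every $x\in A$, $y\in B$ are $r$-intersecting. A pair $(A,B)$ of $r$-cross-intersecting families in $S_p$ is maximal if it maximizes $|A|\cdot|B|$ among all $r$-cross-intersecting pairs in $S_p$. A coordinate $i$ is irrelevant for $A\subseteq S_p$ if whenever two elements of $S_p$ differ only in coordinate $i$ and one lies in $A$, so does the other; otherwise $i$ is relevant for $A$. For $T\subseteq[n]$, $x_0\in S_p$ and $0\le k\le |T|$, the Hamming ball of radius $k$ around $x_0$ in the coordinates $T$ is $\{x\in S_p: |\{i\in T: x_i\ne (x_0)_i\}|\le k\}$. *)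

(* Defs.v *)
From mathcomp Require Import all_boot.
Set Implicit Arguments. Unset Strict Implicit. Unset Printing Implicit Defensive.

(* S_p = [p_1] x ... x [p_n], coordinates indexed by 'I_n, the i-th
   coordinate ranges over 'I_(p i) (a set of size p_i standing for [p_i]). *)
Definition Sp (n : nat) (p : 'I_n -> nat) : finType :=
  {dffun forall i : 'I_n, 'I_(p i)}.

Section Defs.
Variables (n : nat) (p : 'I_n -> nat).

Definition size_vector : Prop := forall i : 'I_n, 2 <= p i.

Definition agree (x y : Sp p) : {set 'I_n} := [set i | x i == y i].

Definition r_intersecting (r : nat) (x y : Sp p) : Prop := r <= #|agree x y|.

Definition r_cross_intersecting (r : nat) (A B : {set Sp p}) : Prop :=
  forall x y, x \in A -> y \in B -> r_intersecting r x y.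

Definition maximal_pair (r : nat) (A B : {set Sp p}) : Prop :=
  r_cross_intersecting r A B /\
  forall A' B' : {set Sp p}, r_cross_intersecting r A' B' ->
    #|A'| * #|B'| <= #|A| * #|B|.

Definition irrelevant (A : {set Sp p}) (i : 'I_n) : Prop :=
  forall x y : Sp p, (forall j, j != i -> x j = y j) -> x \in A -> y \in A.

Definition relevant (A : {set Sp p}) (i : 'I_n) : Prop := ~ irrelevant A i.

Definition hamming_ball (T : {set 'I_n}) (x0 : Sp p) (k : nat) : {set Sp p} :=
  [set x : Sp p | #|[set i in T | x i != x0 i]| <= k].

End Defs.

(* Main.v *)
Require Import Defs.
From mathcomp Require Import all_boot zify.
Set Implicit Arguments. Unset Strict Implicit. Unset Printing Implicit Defensive.

Definition LC (s : nat -> nat) := forall a c d, a <= c -> s a * s (c + d) <= s c * s (a + d).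
Definition shift (s : nat -> nat) (a : nat) := if a is a'.+1 then s a' else 0.

Lemma LC_shift s : LC s -> LC (shift s).
Proof.
move=> H [|a] [|c] d //=; rewrite ?addSn /=.
by rewrite ltnS => /H.
Qed.

Lemma LC_cross s : LC s -> forall a c d, a <= c ->
  s a * shift s (c + d) + shift s a * s (c + d) <= s c * shift s (a + d) + shift s c * s (a + d).
Proof.
move=> H [|a] c [|d] hac.
- case: c hac => [|c] _ /=; rewrite ?addn0 /=; lia.
- have := H 0 c d hac. rewrite add0n addnS /= add0n. lia.
- case: c hac => [|c] //= hac. rewrite !addn0 /=. lia.
- case: c hac => [|c] //=; rewrite ltnS => hac.
  rewrite !addnS /= !addSn /=.
  have := H a.+1 c.+1 d hac. have := H a c d.+2 hac. rewrite !addSn !addnS. lia.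
Qed.

Lemma LC_step s q : LC s -> LC (fun a => s a + q * shift s a).
Proof.
move=> H a c d hac.
have h0 := H a c d hac.
have h1 := LC_cross H d hac.
have h2 := LC_shift H d hac.
move: h0 h1 h2.
set A0 := s a; set A1 := shift s a; set B0 := s (c+d); set B1 := shift s (c+d).
set C0 := s c; set C1 := shift s c; set D0 := s (a+d); set D1 := shift s (a+d).
move=> h0 h1 h2.
have E1 : (A0 + q * A1) * (B0 + q * B1) = A0 * B0 + q * (A0 * B1 + A1 * B0) + q * q * (A1 * B1).
  by rewrite !mulnDl !mulnDr !mulnA; lia.
have E2 : (C0 + q * C1) * (D0 + q * D1) = C0 * D0 + q * (C0 * D1 + C1 * D0) + q * q * (C1 * D1).
  by rewrite !mulnDl !mulnDr !mulnA; lia.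
rewrite E1 E2. apply: leq_add; [apply: leq_add|]; by rewrite ?leq_mul2l ?h0 ?h1 ?h2 ?orbT.
Qed.

Lemma LC_base : LC (fun a => (a == 0 : nat)).
Proof. by move=> [|a] [|c] [|d]. Qed.

Definition Fs (s : nat -> nat) k := \sum_(a < k) s a.

Lemma Fs_S s k : Fs s k.+1 = Fs s k + s k.
Proof. by rewrite /Fs big_ord_recr. Qed.

Lemma sum_shift s e k : \sum_(a < k) s (a + e) + Fs s e = Fs s (k + e).
Proof.
elim: k => [|k IH]; first by rewrite big_ord0.
by rewrite big_ord_recr /= addnAC IH addSn Fs_S.
Qed.

Lemma sum_LC s c e k : LC s -> k <= c ->
  \sum_(a < k) s a * s (c + e) <= s c * \sum_(a < k) s (a + e).
Proof.
move=> H; elim: k => [|k IH] hk; first by rewrite !big_ord0.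
rewrite !big_ord_recr /= mulnDr; apply: leq_add; first exact: IH (ltnW hk).
exact: H (ltnW hk).
Qed.

Lemma K1arith s a0 b : LC s -> 0 < s 0 -> 0 < s a0.+1 -> a0 + 2 <= b ->
  Fs s a0.+1 * Fs s b.+1 < Fs s a0.+2 * Fs s b.
Proof.
move=> H s0 su hb.
set e := b - a0.+1.
have be : b = a0.+1 + e by rewrite /e; lia.
have e1 : 0 < e by rewrite /e; lia.
have h1 := sum_LC e H (leqnn a0.+1).
have h2 := sum_shift s e a0.+1.
have h3 : s 0 <= Fs s e.
  case: e e1 {be h1 h2} => // e _; rewrite /Fs big_ord_recl /=; exact: leq_addr.
rewrite [Fs s a0.+2]Fs_S [Fs s b.+1]Fs_S.
rewrite /Fs -big_distrl /= -be in h1.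
rewrite -/(Fs s a0.+1) in h1.
rewrite -be in h2.
move: h1 h2 h3.
set X := Fs s a0.+1; set Y := Fs s b; set S := \sum_(a < a0.+1) s (a + e); set F := Fs s e.
move=> h1 h2 h3.
nia.
Qed.

Section ES.
Variable n : nat.
Variable q : 'I_n -> nat.

Definition es (T : {set 'I_n}) a :=
  \sum_(S : {set 'I_n} | (S \subset T) && (#|S| == a)) \prod_(i in S) q i.

Lemma es0 a : es set0 a = (a == 0).
Proof.
rewrite /es; case: a => [|a].
  rewrite (big_pred1 set0) ?big_set0 //.
  by move=> S /=; rewrite subset0; case: eqP => // ->; rewrite cards0.
rewrite big_pred0 // => S; rewrite subset0; case: eqP => // ->; by rewrite cards0.
Qed.

Lemma es_rec (i : 'I_n) (T0 : {set 'I_n}) a : i \notin T0 ->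
  es (i |: T0) a = es T0 a + q i * shift (es T0) a.
Proof.
move=> iT0; rewrite /es [LHS](bigID (fun S : {set 'I_n} => i \in S)) /= addnC; congr (_ + _).
  apply: eq_bigl => S; case iS: (i \in S); rewrite ?andbF ?andbT //=.
    apply/esym/negbTE; apply/negP => /andP [/subsetP /(_ i iS)]; by rewrite (negbTE iT0).
  case: (S \subset T0) /idP => h; case: (S \subset i |: T0) /idP => h'; rewrite //=.
    by case: h'; apply: subset_trans h (subsetUr _ _).
  case: h; apply/subsetP => x xS; have := subsetP h' x xS; rewrite in_setU1.
  by case: eqP => [xi|] //; move: xS; rewrite xi iS.
rewrite (reindex_onto (fun S' => i |: S') (fun S => S :\ i)) /=; last first.
  by move=> S /andP [_ iS]; rewrite setD1K.
have hD : forall S : {set 'I_n}, ((i |: S) :\ i == S) = (i \notin S).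
  move=> S; case iS: (i \in S) => /=.
    by apply/negbTE/eqP => /setP /(_ i); rewrite !inE eqxx iS.
  by rewrite setU1K ?iS // eqxx.
under eq_bigl => S do rewrite hD setU11 andbT cardsU1.
case: a => [|a] /=.
  rewrite big_pred0 ?muln0 // => S.
  by case: (i \in S); rewrite ?andbF.
rewrite big_distrr /=; apply: eq_big => S.
  case iS: (i \in S) => /=; rewrite ?andbF ?andbT //.
    apply/esym/negbTE/negP => /andP [/subsetP /(_ i iS)]; by rewrite (negbTE iT0).
  rewrite -[_ + #|S|]/(#|S|.+1) eqSS.
  congr (_ && _).
  apply/idP/idP => h.
    apply/subsetP => x xS; have := subsetP h x (setU1r _ xS); rewrite in_setU1.
    by case: eqP => [xi|] //; move: xS; rewrite xi iS.
  by apply: setUS.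
move=> /andP [_ iS].
by rewrite big_setU1.
Qed.

Lemma set_ind (P : {set 'I_n} -> Prop) :
  P set0 -> (forall (i : 'I_n) (T0 : {set 'I_n}), i \notin T0 -> P T0 -> P (i |: T0)) -> forall T, P T.
Proof.
move=> H0 HS T; suff : forall k (T : {set 'I_n}), #|T| <= k -> P T by apply; exact: leqnn.
move=> k; elim: k => [|k IH] {}T hT.
  by move: hT; rewrite leqn0 cards_eq0 => /eqP ->.
case: (set_0Vmem T) => [->//|[i iT]].
rewrite -(setD1K iT); apply: HS; first by rewrite !inE eqxx.
by apply: IH; move: hT; rewrite (cardsD1 i T) iT add1n.
Qed.

Lemma es_LC (T : {set 'I_n}) : LC (es T).
Proof.
elim/set_ind: T => [|i T0 iT0 IH].
  move=> a c d hac; rewrite !es0; exact: LC_base.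
move=> a c d hac; rewrite !es_rec //; exact: LC_step IH a c d hac.
Qed.

Lemma es_0 (T : {set 'I_n}) : es T 0 = 1.
Proof.
elim/set_ind: T => [|i T0 iT0 IH]; first by rewrite es0.
by rewrite es_rec //= muln0 addn0.
Qed.

Lemma es_pos (T : {set 'I_n}) a : (forall i, 0 < q i) -> a <= #|T| -> 0 < es T a.
Proof.
move=> hq; elim/set_ind: T a => [|i T0 iT0 IH] a.
  by rewrite cards0 leqn0 => /eqP ->; rewrite es0.
rewrite cardsU1 iT0 add1n es_rec // => ha.
case: (leqP a #|T0|) => h; first by rewrite ltn_addr // IH.
have -> : a = #|T0|.+1 by apply/eqP; rewrite eqn_leq ha h.
by rewrite /= addn_gt0 muln_gt0 hq (IH #|T0|) ?orbT.
Qed.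
End ES.

Section Count.
Variable n : nat.
Variable p : 'I_n -> nat.

Definition Pout (T : {set 'I_n}) := \prod_(i | i \notin T) p i.
Definition qq (i : 'I_n) := (p i).-1.

Lemma card_D (T S : {set 'I_n}) (x0 : Sp p) : S \subset T ->
  #|[set x : Sp p | [set i in T | x i != x0 i] == S]| = \prod_(i in S) qq i * Pout T.
Proof.
move=> ST.
pose F := fun i : 'I_n => [pred v : 'I_(p i) | if i \in S then v != x0 i else if i \in T then v == x0 i else true].
have -> : #|[set x : Sp p | [set i in T | x i != x0 i] == S]| = #|(family F : simpl_pred (Sp p))|.
  apply: eq_card => x; rewrite inE; apply/eqP/familyP.
    move=> hx i; rewrite inE /=.
    case iS: (i \in S).
      by move: iS; rewrite -hx inE => /andP [].
    case iT: (i \in T) => //.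
    by move: iS; rewrite -hx inE iT /= => /negbFE.
  move=> hx; apply/setP => i; rewrite inE; have := hx i; rewrite inE /=.
  case iS: (i \in S).
    by move=> ->; rewrite (subsetP ST i iS).
  by case: (i \in T) => //= ->.
rewrite card_family foldrE big_map big_enum /=.
rewrite (bigID (mem S)) /=; congr (_ * _).
  apply: eq_bigr => i iS; rewrite /F /= iS.
  by rewrite cardC1 card_ord.
rewrite /Pout (bigID (mem T)) /= [X in X * _]big1 ?mul1n.
  apply: eq_big => i.
    case iT: (i \in T); rewrite ?andbF ?andbT //=.
    by apply/negP => iS; rewrite (subsetP ST i iS) in iT.
  move=> /andP [iS iT]; rewrite (negbTE iS) (negbTE iT).
  by rewrite -[RHS](card_ord (p i)); apply: eq_card.
move=> i /andP [iS iT]; rewrite (negbTE iS) iT.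
exact: card1.
Qed.


Lemma card_Da (T : {set 'I_n}) (x0 : Sp p) a :
  #|[set x : Sp p | #|[set i in T | x i != x0 i]| == a]| = es qq T a * Pout T.
Proof.
rewrite /es big_distrl /=.
rewrite -(eq_bigr _ (fun S h => card_D x0 (proj1 (andP h)))).
rewrite -sum1_card.
transitivity (\sum_(x : Sp p) \sum_(S : {set 'I_n} | (S \subset T) && (#|S| == a))
   ([set i in T | x i != x0 i] == S : nat)).
  rewrite [RHS](bigID (fun x : Sp p => x \in [set x : Sp p | #|[set i in T | x i != x0 i]| == a])) /=.
  rewrite [X in _ = _ + X]big1 ?addn0.
    apply: eq_bigr => x xin; rewrite (bigD1 [set i in T | x i != x0 i]) /=; last first.
      by rewrite inE in xin; rewrite xin andbT; apply/subsetP => i; rewrite inE => /andP [].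
    rewrite eqxx big1 // => S /andP [_ h]; by rewrite eq_sym (negbTE h).
  move=> x xin; apply: big1 => S /andP [_ /eqP hS].
  case: eqP => // h; move: xin; by rewrite inE h hS eqxx.
rewrite exchange_big /=; apply: eq_bigr => S _.
by rewrite -sum1_card (big_mkcond (fun x => x \in _)) /=; apply: eq_bigr => x _; rewrite inE.
Qed.

Lemma sum_ind (m k : nat) : \sum_(a < k.+1) (m == a : nat) = (m <= k).
Proof.
elim: k => [|k IH]; first by rewrite big_ord_recl big_ord0 addn0 leqn0.
rewrite big_ord_recr /= IH.
case: leqP => h /=.
  rewrite (_ : (m == k.+1) = false) ?(leq_trans h) //; apply/negbTE; by rewrite neq_ltn ltnS h.
by rewrite eqn_leq h andbT.
Qed.

Lemma card_ball (T : {set 'I_n}) (x0 : Sp p) k :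
  #|hamming_ball T x0 k| = Fs (es qq T) k.+1 * Pout T.
Proof.
rewrite /Fs big_distrl /=.
under eq_bigr => a _ do rewrite -(card_Da T x0).
have cs : forall (X : {set Sp p}), #|X| = \sum_x (x \in X : nat).
  by move=> X; rewrite -sum1_card big_mkcond.
rewrite cs; under [RHS]eq_bigr => a _ do rewrite cs.
rewrite exchange_big /=; apply: eq_bigr => x _.
rewrite inE -sum_ind; apply: eq_bigr => a _; by rewrite inE.
Qed.
End Count.

Section Main.
Variable n : nat.
Variable p : 'I_n -> nat.
Variable hp : size_vector p.

Definition oth (i : 'I_n) (v : 'I_(p i)) : 'I_(p i) :=
  if val v == 0 then Ordinal (hp i) else Ordinal (ltnW (hp i)).

Lemma oth_neq (i : 'I_n) (v : 'I_(p i)) : oth v != v.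
Proof.
case: v => m hm; rewrite /oth /=; case: ifP => /eqP h; apply/negP => /eqP e; move: (congr1 val e) => /= e'; lia.
Qed.

Definition upd (x : Sp p) (i : 'I_n) (v : 'I_(p i)) : Sp p :=
  @finfun _ (fun j => 'I_(p j)) (dfwith (fun j => x j) v).

Lemma upd_in (x : Sp p) (i : 'I_n) (v : 'I_(p i)) : upd x v i = v.
Proof. by rewrite /upd ffunE dfwith_in. Qed.

Lemma upd_out (x : Sp p) (i : 'I_n) (v : 'I_(p i)) j : i != j -> upd x v j = x j.
Proof. by move=> h; rewrite /upd ffunE dfwith_out. Qed.

Definition x00 : Sp p := @finfun _ (fun j => 'I_(p j)) (fun j => Ordinal (ltnW (hp j))).

Lemma agreeC (x y : Sp p) : agree x y = agree y x.
Proof. by apply/setP => i; rewrite !inE eq_sym. Qed.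

Lemma agree_refl (x : Sp p) : #|agree x x| = n.
Proof.
rewrite -[RHS](card_ord n); apply: eq_card => i; by rewrite !inE eqxx.
Qed.

Definition NB r (A : {set Sp p}) := [set y : Sp p | [forall x in A, r <= #|agree x y|]].

Lemma cross_NB r (A : {set Sp p}) : r_cross_intersecting r A (NB r A).
Proof. by move=> x y xA; rewrite inE => /forall_inP /(_ x xA). Qed.

Lemma cross_sub r (A B : {set Sp p}) : r_cross_intersecting r A B -> B \subset NB r A.
Proof. by move=> h; apply/subsetP => y yB; rewrite inE; apply/forall_inP => x xA; apply: h. Qed.

Lemma cross_sym r (A B : {set Sp p}) : r_cross_intersecting r A B -> r_cross_intersecting r B A.
Proof. by move=> h x y xB yA; rewrite /r_intersecting agreeC; apply: h. Qed.

Lemma max_sym r (A B : {set Sp p}) : maximal_pair r A B -> maximal_pair r B A.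
Proof.
case=> h1 h2; split; first exact: cross_sym.
move=> A' B' h; rewrite mulnC [_ * #|A|]mulnC; apply: h2; exact: cross_sym.
Qed.

Lemma max_pos r (A B : {set Sp p}) : r <= n -> maximal_pair r A B -> 0 < #|A| * #|B|.
Proof.
move=> hrn [_ h]; apply: leq_trans (h [set x00] [set x00] _).
  by rewrite cards1.
by move=> x y; rewrite !inE => /eqP -> /eqP ->; rewrite /r_intersecting agree_refl.
Qed.

Lemma max_NB r (A B : {set Sp p}) : r <= n -> maximal_pair r A B -> B = NB r A.
Proof.
move=> hrn hm; have hpos := max_pos hrn hm.
case: hm => hc hmax.
have sub := cross_sub hc.
apply/eqP; rewrite eqEcard sub /=.
have := hmax _ _ (@cross_NB r A).
rewrite leq_mul2l; case/orP => //.
by move: hpos; rewrite muln_gt0 => /andP [/lt0n_neq0 /negbTE ->].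
Qed.

Lemma irr_NB r (A : {set Sp p}) i : irrelevant A i -> irrelevant (NB r A) i.
Proof.
move=> hA x y hxy; rewrite !inE => /forall_inP hx; apply/forall_inP => z zA.
pose z' := upd z (oth (x i)).
have z'A : z' \in A.
  apply: hA zA => j ji; rewrite /z' upd_out // eq_sym //.
apply: leq_trans (hx _ z'A) _; apply: subset_leq_card; apply/subsetP => j.
rewrite !inE; case: (eqVneq j i) => [->|ji].
  by rewrite /z' upd_in (negbTE (oth_neq _)).
rewrite /z' upd_out; last by rewrite eq_sym. by rewrite (hxy j ji).
Qed.
End Main.

Lemma exists_sub (T : finType) (U : {set T}) k : k <= #|U| ->
  exists L : {set T}, (L \subset U) /\ #|L| = k.
Proof.
elim: k => [|k IH] hk; first by exists set0; rewrite sub0set cards0.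
have [L [LU hL]] := IH (ltnW hk).
have : ~~ (U \subset L).
  apply/negP => /subset_leq_card; rewrite hL; lia.
case/subsetPn => u uU uL.
exists (u |: L); split; first by rewrite subUset sub1set uU LU.
by rewrite cardsU1 uL hL.
Qed.

Section Balls.
Variable n : nat.
Variable p : 'I_n -> nat.
Variable hp : size_vector p.

Lemma cross_ball (T : {set 'I_n}) (x0 : Sp p) a b r : a + b + r <= #|T| ->
  r_cross_intersecting r (hamming_ball T x0 a) (hamming_ball T x0 b).
Proof.
move=> h x y; rewrite !inE => hx hy.
set Dx := [set i in T | x i != x0 i] in hx *.
set Dy := [set i in T | y i != x0 i] in hy *.
have sub : T :\: (Dx :|: Dy) \subset agree x y.
  apply/subsetP => i; rewrite !inE negb_or => /andP [/andP [hi1 hi2] iT].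
  by rewrite iT /= !negbK in hi1 hi2; rewrite (eqP hi1) (eqP hi2).
apply: leq_trans (subset_leq_card sub).
rewrite cardsD.
have h1 : #|T :&: (Dx :|: Dy)| <= #|Dx :|: Dy| by apply: subset_leq_card; apply: subsetIr.
have h2 := cardsU Dx Dy.
rewrite /r_intersecting. lia.
Qed.

Lemma NB_ball (T : {set 'I_n}) (x0 : Sp p) l r (y : Sp p) : 1 <= r ->
  (y \in NB r (hamming_ball T x0 l)) = (#|[set i in T | y i != x0 i]| + l + r <= #|T|).
Proof.
move=> hr.
set Dy := [set i in T | y i != x0 i].
have DyT : Dy \subset T by apply/subsetP => i; rewrite inE => /andP [].
have cU : #|T :\: Dy| = #|T| - #|Dy|.
  by rewrite cardsD (setIidPr DyT).
apply/idP/idP => hy.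
  set U := T :\: Dy.
  have [L [LU hL]] := @exists_sub _ U (minn l #|U|) (geq_minr _ _).
  pose x : Sp p := @finfun _ (fun j => 'I_(p j))
     (fun j => if (j \in T) && (j \notin L) then x0 j else oth hp (y j)).
  have xin : x \in hamming_ball T x0 l.
    rewrite inE; apply: leq_trans (_ : #|L| <= l); last by rewrite hL geq_minl.
    apply: subset_leq_card; apply/subsetP => j; rewrite inE ffunE.
    case/andP => jT; rewrite jT /=; case: (j \in L) => //=; by rewrite eqxx.
  move: hy; rewrite inE => /forall_inP /(_ x xin) hx.
  have sub : agree x y \subset U :\: L.
    apply/subsetP => j; rewrite !inE ffunE.
    case: ifP => [/andP [jT jL]|_].
      by rewrite jT jL /= andbT negbK eq_sym.
    by rewrite (negbTE (oth_neq _ _)).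
  have := leq_trans hx (subset_leq_card sub).
  rewrite cardsD (setIidPr LU) hL cU.
  lia.
rewrite inE; apply/forall_inP => x hx.
have hb : l + #|Dy| + r <= #|T| by lia.
apply: (cross_ball hb hx); by rewrite inE.
Qed.
End Balls.

Lemma Fs_step s q k : Fs (fun a => s a + q * shift s a) k.+1 = Fs s k.+1 + q * Fs s k.
Proof.
rewrite /Fs big_split /= -big_distrr /=; congr (_ + q * _).
by rewrite big_ord_recl /= add0n.
Qed.

Section K.
Variable n : nat.
Variable p : 'I_n -> nat.
Variable hp : size_vector p.

Lemma Pout_pos T : 0 < Pout p T.
Proof. rewrite /Pout; apply: prodn_cond_gt0 => i _; exact: ltnW (hp i). Qed.

Lemma qq_pos i : 0 < qq p i.
Proof. rewrite /qq; have := hp i; lia. Qed.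

Lemma Pout_U1 i (T0 : {set 'I_n}) : i \notin T0 -> Pout p T0 = p i * Pout p (i |: T0).
Proof.
move=> iT0; rewrite /Pout (bigD1 i) //=; congr (_ * _).
apply: eq_bigl => x; by rewrite !inE negb_or andbC.
Qed.

Lemma ball_U1 i (T0 : {set 'I_n}) (x0 : Sp p) k : i \notin T0 ->
  p i * #|hamming_ball (i |: T0) x0 k| = (es (qq p) T0 k + p i * Fs (es (qq p) T0) k) * Pout p T0.
Proof.
move=> iT0; rewrite card_ball (Pout_U1 iT0).
have -> : Fs (es (qq p) (i |: T0)) k.+1 = Fs (fun a => es (qq p) T0 a + qq p i * shift (es (qq p) T0) a) k.+1.
  by apply: eq_bigr => a _; rewrite es_rec.
rewrite Fs_step Fs_S.
have hi : p i = (qq p i).+1 by rewrite /qq; have := hp i; lia.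
rewrite {1 3}hi; lia.
Qed.

Lemma K2 (T : {set 'I_n}) (x0 : Sp p) i j k : i \in T -> j \notin T -> p j < p i -> k < #|T| ->
  #|hamming_ball T x0 k| < #|hamming_ball (j |: (T :\ i)) x0 k|.
Proof.
move=> iT jT hji hk.
set T0 := T :\ i.
have iT0 : i \notin T0 by rewrite !inE eqxx.
have jT0 : j \notin T0 by rewrite !inE negb_and jT orbT.
have hT : T = i |: T0 by rewrite setD1K.
have k0 : k <= #|T0| by move: hk; rewrite hT cardsU1 iT0; lia.
have he := es_pos (@qq_pos) k0.
have h1 := ball_U1 x0 k iT0.
have h2 := ball_U1 x0 k jT0.
rewrite -hT in h1.
have hP := Pout_pos T0.
move: h1 h2 he hP.
set b1 := #|hamming_ball T x0 k|; set b2 := #|hamming_ball (j |: T0) x0 k|.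
set e := es (qq p) T0 k; set E := Fs (es (qq p) T0) k; set P := Pout p T0.
move=> h1 h2 he hP.
have : p j * (p i * b1) < p i * (p j * b2).
  rewrite h1 h2 !mulnA ltn_pmul2r // !mulnDr [p j * (p i * E)]mulnCA ltn_add2r.
  by rewrite ltn_pmul2r.
rewrite mulnA [p j * p i]mulnC -mulnA ltn_pmul2l //; last by have := hp i; lia.
rewrite ltn_pmul2l //; have := hp j; lia.
Qed.

Lemma K1 (T : {set 'I_n}) (x0 : Sp p) a0 b : a0 + 2 <= b -> a0 < #|T| ->
  #|hamming_ball T x0 a0| * #|hamming_ball T x0 b| <
  #|hamming_ball T x0 a0.+1| * #|hamming_ball T x0 b.-1|.
Proof.
move=> hb ha.
have key : forall X Y Z W P, X*Y < Z*W -> 0 < P -> (X*P)*(Y*P) < (Z*P)*(W*P).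
  by move=> X Y Z W P h hP; rewrite mulnACA [Z*P*_]mulnACA ltn_pmul2r ?muln_gt0 ?hP.
rewrite !card_ball; apply: key (Pout_pos T).
rewrite prednK; last by lia.
have := K1arith (es_LC (qq p) T) (_ : 0 < es (qq p) T 0) (es_pos (@qq_pos) ha) hb.
by rewrite es_0 => /(_ isT).
Qed.
End K.
Unset Implicit Arguments.

Theorem theorem4 (n : nat) (p : 'I_n -> nat) (r : nat)
  (hp : size_vector p) (hr1 : 1 <= r) (hrn : r <= n)
  (A B : {set Sp p}) (hAB : maximal_pair r A B) :
  (* each of A, B determines the other *)
  (forall B' : {set Sp p}, maximal_pair r A B' -> B' = B) /\
  (forall A' : {set Sp p}, maximal_pair r A' B -> A' = A) /\
  (* same relevant coordinates *)
  (forall i : 'I_n, relevant A i <-> relevant B i) /\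
  (* Hamming-ball case *)
  (forall (T : {set 'I_n}) (x0 : Sp p) (l : nat),
     l <= #|T| -> A = hamming_ball T x0 l ->
     [/\ l + r <= #|T|,
         B = hamming_ball T x0 (#|T| - l - r),
         (forall i j : 'I_n, i \in T -> j \notin T -> p i <= p j),
         #|T| <= (2 * l + r).+1
       & 2 * l + r <= #|T|.+1]).
Proof.
have hBA := max_sym hAB.
have eB : B = NB r A := max_NB hp hrn hAB.
have eA : A = NB r B := max_NB hp hrn hBA.
split; first by move=> B' h; rewrite (max_NB hp hrn h) -eB.
split; first by move=> A' h; rewrite (max_NB hp hrn (max_sym h)) -eA.
split.
  move=> i; split => h1 h2; apply: h1.
    by rewrite eA; exact: irr_NB h2.
  by rewrite eB; exact: irr_NB h2.
move=> T x0 l hl eqA.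
have hpos := max_pos hp hrn hAB.
have hlr : l + r <= #|T|.
  case: (leqP (l + r) #|T|) => // hlt.
  have : B = set0.
    apply/setP => y; rewrite eB eqA (NB_ball hp) // inE; apply/negbTE; rewrite -ltnNge; lia.
  by move=> hB; move: hpos; rewrite hB cards0 muln0.
set m := #|T| - l - r.
have eBb : B = hamming_ball T x0 m.
  apply/setP => y; rewrite eB eqA (NB_ball hp) // inE; apply/idP/idP => h; rewrite /m; lia.
have hmax := hAB.2.
rewrite eqA eBb in hmax.
split => //.
- move=> i j iT jT; rewrite leqNgt; apply/negP => hji.
  have hc : #|j |: (T :\ i)| = #|T|.
    rewrite cardsU1 !inE negb_and jT orbT /= (cardsD1 i T) iT //.
  have hc2 : l + m + r <= #|j |: (T :\ i)| by rewrite hc /m; lia.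
  have := hmax _ _ (cross_ball (x0 := x0) hc2).
  rewrite leqNgt => /negP; apply.
  apply: ltn_mul; apply: K2 => //; rewrite /m; lia.
- rewrite leqNgt; apply/negP => h.
  have hc2 : l.+1 + m.-1 + r <= #|T| by rewrite /m; lia.
  have := hmax _ _ (cross_ball (x0 := x0) hc2).
  rewrite leqNgt => /negP; apply.
  apply: K1 => //; rewrite /m; lia.
- rewrite leqNgt; apply/negP => h.
  have hc2 : l.-1 + m.+1 + r <= #|T| by rewrite /m; lia.
  have := hmax _ _ (cross_ball (x0 := x0) hc2).
  rewrite leqNgt => /negP; apply.
  rewrite mulnC [X in _ < X]mulnC.
  apply: K1 => //; rewrite /m; lia.
Qed.
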